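(* Let $K$ be any field, let $u(x,y)\in K[x,y]\setminus K$ be biased, and let $\rho=(\alpha x+p(y),\beta y+\gamma)$ be a nonaffine triangular automorphism of $K[x,y]$, where $\alpha,\beta\in K\setminus\{0\}$, $\gamma\in K$ and $p(y)\in K[y]$ has degree at least $2$. Then $\deg(\rho u)>\deg u$.
   Context: An automorphism $\rho=(f,g)$ of $K[x,y]$ means $\rho x=f$, $\rho y=g$, and $\rho u=u(f,g)$; so $\rho u=u(\alpha x+p(y),\beta y+\gamma)$. $\deg$ denotes total degree. For $0\ne u\in K[x,y]$, $|u|$ denotes the homogeneous component of $u$ of maximal total degree, and $u$ is called biased if $\deg_x|u|\ge\deg_y|u|$, where $\deg_x,\deg_y$ are the degrees in $x$ and in $y$. *)

(* Defs.v *)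
From HB Require Import structures.
From mathcomp Require Import all_boot all_order all_algebra.
From mathcomp Require Import mpoly.
Set Implicit Arguments. Unset Strict Implicit. Unset Printing Implicit Defensive.
Import Order.TTheory GRing.Theory.
Local Open Scope ring_scope.

(* K[x,y] is {mpoly K[2]}; x = 'X_0, y = 'X_1. *)
Definition ix : 'I_2 := ord0.
Definition iy : 'I_2 := ord_max.

(* total degree (for nonzero u): deg u = msize u - 1 *)
Definition tdeg (K : fieldType) (u : {mpoly K[2]}) : nat := (msize u).-1.

Definition tophom (K : fieldType) (u : {mpoly K[2]}) : {mpoly K[2]} :=
  pihomog mdeg (msize u).-1 u.

Definition degx (K : fieldType) (u : {mpoly K[2]}) : nat :=
  (\max_(m <- msupp u) m ix)%N.
Definition degy (K : fieldType) (u : {mpoly K[2]}) : nat :=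
  (\max_(m <- msupp u) m iy)%N.

Definition biased (K : fieldType) (u : {mpoly K[2]}) : Prop :=
  (degy (tophom u) <= degx (tophom u))%N.

Definition polyY (K : fieldType) (p : {poly K}) : {mpoly K[2]} :=
  (map_poly (@mpolyC 2 K) p).['X_iy].

Definition triang (K : fieldType) (alpha beta gamma : K) (p : {poly K})
  (u : {mpoly K[2]}) : {mpoly K[2]} :=
  u \mPo [tuple alpha *: 'X_ix + polyY p; beta *: 'X_iy + gamma%:MP].

(* Main.v *)
Require Import Defs.
From HB Require Import structures.
From mathcomp Require Import all_boot all_order all_algebra.
From mathcomp Require Import mpoly.
From mathcomp Require Import zify ring.
Import GRing.Theory.
Local Open Scope ring_scope.

Lemma bigmax_attained (T : eqType) (s : seq T) (F : T -> nat) :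
  s != [::] -> exists2 x, x \in s & F x = (\max_(y <- s) F y)%N.
Proof.
elim: s => // x s IH _; rewrite big_cons.
case: (eqVneq s [::]) => [->|ne].
  by exists x; rewrite ?mem_head // big_nil maxn0.
have [y ys <-] := IH ne.
case: (leqP (F x) (F y)) => h.
  by exists y; rewrite // inE ys orbT.
by exists x; rewrite // mem_head.
Qed.

Lemma coef_neq0_size (R : nzSemiRingType) (q : {poly R}) i :
  q`_i != 0 -> (i < size q)%N.
Proof.
move=> h; rewrite ltnNge; apply/negP => /leq_sizeP/(_ i (leqnn _)) /eqP.
by apply/negP.
Qed.

Lemma mcoeff_pihomog (K : fieldType) d (u : {mpoly K[2]}) m :
  (pihomog mdeg d u)@_m = if mdeg m == d then u@_m else 0.
Proof.
rewrite pihomogE raddf_sum /=.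
under eq_bigr do rewrite mcoeffZ mcoeffX.
case: (boolP (m \in msupp u)) => hm.
  rewrite big_mkcond (bigD1_seq m hm (msupp_uniq u)) /= eqxx mulr1.
  rewrite big1 ?addr0 //.
  by move=> m' ne; case: ifP => // _; rewrite (negbTE ne) mulr0.
have hm' := hm; move: hm'; rewrite mcoeff_msupp negbK => /eqP ->.
rewrite big_seq_cond big1; first by case: ifP.
move=> m' /andP [h _]; case: (eqVneq m' m) => [e|ne]; last by rewrite mulr0.
by move: hm; rewrite -e h.
Qed.

Lemma mdeg2 (m : 'X_{1..2}) : mdeg m = (m ix + m iy)%N.
Proof.
rewrite mdegE !big_ord_recl big_ord0 addn0; congr (_ + m _)%N.
by apply/val_inj.
Qed.

Lemma u_facts (K : fieldType) (u : {mpoly K[2]}) :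
  (forall c : K, u != c%:MP) -> biased u ->
  exists2 ms, ms \in msupp u &
    [/\ mdeg ms = tdeg u, (ms iy <= ms ix)%N & (0 < ms ix)%N].
Proof.
move=> nc hb.
have s2 : (1 < msize u)%N.
  rewrite ltnNge; apply/negP => /msize1_polyC e.
  by move: (nc u@_0); rewrite {1}e eqxx.
have u0 : u != 0 by apply: contraTneq s2 => ->; rewrite msize0.
have hl := mlead_supp u0.
have dl := mlead_deg u0.
have tne : msupp (tophom u) != [::].
  apply/negP => /eqP e.
  have : mlead u \in msupp (tophom u).
    rewrite mcoeff_msupp /tophom mcoeff_pihomog -dl /= eqxx.
    by rewrite -mcoeff_msupp.
  by rewrite e.
have [ms msin msx] := @bigmax_attained _ _ (fun m : 'X_{1..2} => m ix) tne.
have : ms \in msupp (tophom u) := msin.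
rewrite mcoeff_msupp /tophom mcoeff_pihomog.
case: ifP => [/eqP hd hu|]; last by rewrite eqxx.
exists ms; first by rewrite mcoeff_msupp.
have hy : (ms iy <= degy (tophom u))%N.
  by apply: (leq_bigmax_seq (F := fun m : 'X_{1..2} => m iy)) msin _.
have hxy : (ms iy <= ms ix)%N.
  apply: (leq_trans hy); rewrite /degx in msx; rewrite msx; exact: hb.
split => //.
rewrite lt0n; apply/negP => /eqP h0.
move: hd hxy; rewrite mdeg2 h0 leqn0 => hd /eqP e0.
move: hd; rewrite e0 /tdeg; move: s2; case: (msize u) => [|[|k]] //.
Qed.

Definition psih (K : fieldType) (n : nat) (i : 'I_2) : {poly {poly K}} :=
  if i == ix then 'X%:P * 'X^n else 'X.

Notation PSI K n := (mmap ((@polyC {poly K}) \o (@polyC K)) (psih K n)).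

Lemma mmap1_psi (K : fieldType) n (m : 'X_{1..2}) :
  mmap1 (psih K n) m = ('X^(m ix))%:P * 'X^(n * m ix + m iy)%N.
Proof.
rewrite /mmap1 !big_ord_recl big_ord0 mulr1 /psih /=.
have -> : lift ord0 ord0 = iy :> 'I_2 by apply/val_inj.
rewrite exprMn rmorphXn /= -exprM exprD mulrA mulnC.
by [].
Qed.

Lemma psi_coef (K : fieldType) n (f : {mpoly K[2]}) e k :
  ((PSI K n f)`_e)`_k =
  \sum_(m <- msupp f) f@_m * ((m ix == k) && (n * m ix + m iy == e)%N)%:R.
Proof.
rewrite /mmap coef_sum coef_sum; apply: eq_bigr => m _.
rewrite mmap1_psi /= mulrA -rmorphM /= coefCM coefXn.
case: (boolP (e == (n * m ix + m iy)%N)) => [/eqP ee|ne].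
  by rewrite ee eqxx mulr1 coefCM coefXn andbT eq_sym.
by rewrite mulr0 coef0 (eq_sym _ e) (negbTE ne) andbF mulr0.
Qed.

Lemma psi_comp (K : fieldType) n (u : {mpoly K[2]}) (lq : 2.-tuple {mpoly K[2]}) :
  PSI K n (u \mPo lq) = \sum_(m <- msupp u)
    (u@_m)%:P%:P * (PSI K n (tnth lq ix))^+(m ix) * (PSI K n (tnth lq iy))^+(m iy).
Proof.
rewrite comp_mpolyEX rmorph_sum; apply: eq_bigr => m _.
rewrite -mul_mpolyC rmorphM /= mmapC comp_mpolyX rmorph_prod /=.
rewrite !big_ord_recl big_ord0 mulr1 !rmorphXn /= mulrA.
have -> : lift ord0 ord0 = iy :> 'I_2 by apply/val_inj.
by [].
Qed.

Lemma psi_X0 (K : fieldType) n (a : K) (p : {poly K}) :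
  PSI K n (a *: 'X_ix + polyY p) = a%:P%:P * ('X%:P * 'X^n) + map_poly polyC p.
Proof.
rewrite rmorphD /= mmapZ mmapX mmap1U /psih eqxx /=; congr (_ + _).
rewrite /polyY -horner_map /= mmapX mmap1U /psih /=.
rewrite -map_poly_comp.
rewrite (eq_map_poly (g := (@polyC {poly K}) \o (@polyC K))); last first.
  by move=> c /=; rewrite mmapC.
rewrite map_poly_comp.
exact: comp_polyXr.
Qed.

Lemma psi_X1 (K : fieldType) n (b c : K) :
  PSI K n (b *: 'X_iy + c%:MP) = b%:P%:P * 'X + c%:P%:P.
Proof.
rewrite rmorphD /= mmapZ mmapX mmap1U /psih mmapC /=.
by [].
Qed.

Set Implicit Arguments. Unset Strict Implicit.

Lemma coef_top (R : nzSemiRingType) (A : {poly R}) W :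
  (size A <= W.+1)%N -> A`_W = if size A == W.+1 then lead_coef A else 0.
Proof.
move=> h; case: eqP => [e|ne]; first by rewrite lead_coefE e.
have : (size A <= W)%N by rewrite leq_eqVlt (negbTE (introN eqP ne)) in h.
by move/leq_sizeP/(_ W (leqnn _)).
Qed.

Lemma size_pow2 (R : idomainType) (A B : {poly R}) i j :
  A != 0 -> B != 0 ->
  size (A ^+ i * B ^+ j) = ((size A).-1 * i + (size B).-1 * j).+1%N.
Proof.
move=> A0 B0.
have Ai : A ^+ i != 0 by apply: expf_neq0.
have Bj : B ^+ j != 0 by apply: expf_neq0.
rewrite size_mul //.
have sA := size_exp A i; have sB := size_exp B j.
have pA : (0 < size (A ^+ i))%N by rewrite size_poly_gt0.
have pB : (0 < size (B ^+ j))%N by rewrite size_poly_gt0.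
rewrite mulnC [((size B).-1 * _)%N]mulnC.
lia.
Qed.

Lemma lead_pow2 (R : idomainType) (A B : {poly R}) i j :
  lead_coef (A ^+ i * B ^+ j) = lead_coef A ^+ i * lead_coef B ^+ j.
Proof. by rewrite lead_coefM !lead_coef_exp. Qed.

Definition bigP (K : fieldType) (a : K) (p : {poly K}) : {poly {poly K}} :=
  a%:P%:P * ('X%:P * 'X^((size p).-1)) + map_poly polyC p.
Definition Lp (K : fieldType) (a : K) (p : {poly K}) : {poly K} :=
  a%:P * 'X + (lead_coef p)%:P.
Definition bigQ (K : fieldType) (b c : K) : {poly {poly K}} :=
  b%:P%:P * 'X + c%:P%:P.

Lemma Lp_neq0 (K : fieldType) (a : K) (p : {poly K}) : a != 0 -> Lp a p != 0.
Proof.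
move=> a0; apply/negP => /eqP e.
have := congr1 (fun q : {poly K} => q`_1) e.
rewrite /Lp coefD coefCM coefX coefC /= mulr1 addr0 coef0.
by apply/eqP.
Qed.

Lemma size_Lp (K : fieldType) (a : K) (p : {poly K}) : a != 0 -> size (Lp a p) = 2%N.
Proof.
move=> a0; rewrite /Lp size_MXaddC polyC_eq0 (negbTE a0) /=.
by rewrite size_polyC a0.
Qed.

Lemma coef_bigP (K : fieldType) (a : K) (p : {poly K}) k :
  (bigP a p)`_k = (if k == (size p).-1 then a%:P * 'X else 0) + (p`_k)%:P.
Proof.
rewrite /bigP coefD mulrA -rmorphM /= coefCM coefXn coef_map /=.
by case: eqP; rewrite ?mulr1 ?mulr0.
Qed.

Lemma size_bigP (K : fieldType) (a : K) (p : {poly K}) :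
  a != 0 -> (1 < size p)%N -> size (bigP a p) = size p.
Proof.
move=> a0 sp; apply/eqP; rewrite eqn_leq; apply/andP; split.
  apply/leq_sizeP => j hj; rewrite coef_bigP.
  have -> : (j == (size p).-1) = false by apply/negbTE; rewrite neq_ltn; apply/orP; right; lia.
  rewrite add0r (leq_sizeP _ _ (leqnn (size p))) //.
have : (bigP a p)`_(size p).-1 != 0.
  rewrite coef_bigP eqxx -lead_coefE; exact: Lp_neq0.
move/coef_neq0_size; lia.
Qed.

Lemma lead_bigP (K : fieldType) (a : K) (p : {poly K}) :
  a != 0 -> (1 < size p)%N -> lead_coef (bigP a p) = Lp a p.
Proof.
move=> a0 sp; rewrite lead_coefE size_bigP // coef_bigP eqxx -lead_coefE.
by [].
Qed.

Lemma size_bigQ (K : fieldType) (b c : K) : b != 0 -> size (bigQ b c) = 2%N.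
Proof.
move=> b0; rewrite /bigQ size_MXaddC !polyC_eq0 (negbTE b0) /=.
by rewrite size_polyC polyC_eq0 b0.
Qed.

Lemma lead_bigQ (K : fieldType) (b c : K) : b != 0 -> lead_coef (bigQ b c) = b%:P.
Proof.
move=> b0; rewrite lead_coefE size_bigQ // /bigQ coefD coefCM coefX coefC /=.
by rewrite mulr1 addr0.
Qed.

Set Implicit Arguments. Unset Strict Implicit.

Lemma coefW (K : fieldType) (u : {mpoly K[2]}) (a b c : K) (p : {poly K}) W :
  a != 0 -> b != 0 -> (1 < size p)%N ->
  (forall m, m \in msupp u -> ((size p).-1 * m ix + m iy <= W)%N) ->
  (PSI K (size p).-1 (triang a b c p u))`_W =
  \sum_(m <- msupp u) (u@_m)%:P *
     (if ((size p).-1 * m ix + m iy == W)%N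
      then Lp a p ^+ (m ix) * (b%:P) ^+ (m iy) else 0).
Proof.
move=> a0 b0 sp hW.
rewrite /triang psi_comp.
have -> : tnth [tuple a *: 'X_ix + polyY p; b *: 'X_iy + c%:MP] ix
  = a *: 'X_ix + polyY p by [].
have -> : tnth [tuple a *: 'X_ix + polyY p; b *: 'X_iy + c%:MP] iy
  = b *: 'X_iy + c%:MP by [].
rewrite psi_X0 psi_X1 -/(bigP a p) -/(bigQ b c).
rewrite coef_sum big_seq [RHS]big_seq; apply: eq_bigr => m hm.
have P0 : bigP a p != 0 by rewrite -size_poly_eq0 size_bigP //; lia.
have Q0 : bigQ b c != 0 by rewrite -size_poly_eq0 size_bigQ.
rewrite -mulrA coefCM coef_top; last first.
  by rewrite size_pow2 // size_bigP // size_bigQ //= mul1n ltnS hW.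
rewrite (size_pow2 _ _ P0 Q0) size_bigP // size_bigQ //= mul1n eqSS.
by rewrite lead_pow2 lead_bigP // lead_bigQ.
Qed.

Set Implicit Arguments. Unset Strict Implicit.

Lemma mnm2_eq (m m' : 'X_{1..2}) : m ix = m' ix -> m iy = m' iy -> m = m'.
Proof.
move=> hx hy; apply/mnmP => i.
have : (i = ix) \/ (i = iy).
  case: i => [[|[|k]] hk]; [left|right|by []]; exact/val_inj.
by case=> ->.
Qed.

Lemma first_nonzero (K : fieldType) (q : {poly K}) :
  q != 0 -> exists k, [/\ (k < size q)%N, q`_k != 0 & forall j, (j < k)%N -> q`_j = 0].
Proof.
move=> q0.
have ex : exists k, q`_k != 0.
  by exists (size q).-1; rewrite -lead_coefE lead_coef_eq0.
case: (ex_minnP ex) => k hk hmin.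
exists k; split => //; first exact: coef_neq0_size.
move=> j hj; apply/eqP; apply: contraTT hj => hj.
by rewrite -leqNgt hmin.
Qed.

Lemma H_analysis (K : fieldType) (u : {mpoly K[2]}) (a b : K) (p : {poly K})
  (n W d : nat) (ms : 'X_{1..2}) :
  a != 0 -> b != 0 -> p != 0 -> (2 <= n)%N ->
  (forall m, m \in msupp u -> (m ix + m iy <= d)%N) ->
  ms \in msupp u -> (ms ix + ms iy = d)%N -> (ms iy <= ms ix)%N -> (0 < ms ix)%N ->
  (forall m, m \in msupp u -> (n * m ix + m iy <= W)%N) ->
  (exists2 mW, mW \in msupp u & (n * mW ix + mW iy = W)%N) ->
  exists k1, (k1 < ms ix)%N /\
   (\sum_(m <- msupp u) (u@_m)%:P *
     (if (n * m ix + m iy == W)%N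
      then Lp a p ^+ (m ix) * (b%:P) ^+ (m iy) else 0))`_k1 != 0.
Proof.
move=> a0 b0 p0 n2 hd msin msd msxy msx hW [mW mWin mWW].
set P := fun k => has (fun m : 'X_{1..2} => (n * m ix + m iy == W)%N && (m ix == k)) (msupp u).
have exP : exists k, P k.
  by exists (mW ix); apply/hasP; exists mW => //; rewrite mWW !eqxx.
case: (ex_minnP exP) => imin /hasP [mmin mminin /andP [/eqP mminW /eqP mminx]] hmin.
have hmin' : forall m, m \in msupp u -> (n * m ix + m iy = W)%N -> (imin <= m ix)%N.
  move=> m hm hmW; apply: hmin; apply/hasP; exists m => //.
  by rewrite hmW !eqxx.
have Wge := hW ms msin.
have dmin := hd mmin mminin.
have imin_ge : (ms ix <= imin)%N by nia.
have ebound : forall m, m \in msupp u -> (n * m ix + m iy = W)%N ->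
    ((m ix - imin).+1 <= ms ix)%N.
  move=> m hm hmW; have := hmin' m hm hmW; nia.
set L := Lp a p.
set H1 := \sum_(m <- msupp u | (n * m ix + m iy == W)%N)
             (u@_m * b ^+ (m iy)) *: L ^+ (m ix - imin).
have HE : \sum_(m <- msupp u) (u@_m)%:P *
     (if (n * m ix + m iy == W)%N
      then L ^+ (m ix) * (b%:P) ^+ (m iy) else 0) = H1 * L ^+ imin.
  rewrite /H1 mulr_suml [RHS]big_mkcond /= big_seq [RHS]big_seq.
  apply: eq_bigr => m hm; case: eqP => [hmW|]; last by rewrite mulr0.
  have -> : m ix = (imin + (m ix - imin))%N by have := hmin' m hm hmW; lia.
  rewrite addKn exprD -scalerAl -mul_polyC rmorphM rmorphXn /=; ring.
have l0 : lead_coef p != 0 by rewrite lead_coef_eq0.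
have Lx0 : L.[- lead_coef p / a] = 0.
  by rewrite /L /Lp hornerD hornerC mul_polyC hornerZ hornerX mulrCA divff // mulr1 addNr.
have H10 : H1 != 0.
  apply/negP => /eqP e.
  have := congr1 (fun q => q.[- lead_coef p / a]) e.
  rewrite /H1 horner0 horner_sum.
  under eq_bigr do rewrite hornerZ horner_exp Lx0 expr0n.
  rewrite big_mkcond (bigD1_seq mmin mminin (msupp_uniq u)) /=.
  rewrite mminW eqxx mminx subnn eqxx mulr1 big_seq_cond big1 ?addr0.
    by apply/eqP; rewrite mulf_neq0 ?expf_neq0 // -mcoeff_msupp.
  move=> m /andP [hm ne]; case: eqP => // hmW.
  have hle := hmin' m hm hmW.
  have : (m ix - imin != 0)%N.
    apply: contra ne => /eqP h0.
    have ex : m ix = mmin ix by lia.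
    apply/eqP/mnm2_eq => //.
    by rewrite ex in hmW; lia.
  by move=> /negbTE ->; rewrite mulr0.
have L0 : L != 0 by apply: Lp_neq0.
have sH1 : (size H1 <= ms ix)%N.
  rewrite /H1 big_seq_cond.
  apply: (big_ind (fun q : {poly K} => (size q <= ms ix)%N)).
  - by rewrite size_poly0.
  - move=> x y hx hy; apply: leq_trans (size_polyD _ _) _.
    by rewrite geq_max hx hy.
  - move=> m /andP [hm /eqP hmW]; apply: leq_trans (size_scale_leq _ _) _.
    have e1 := size_exp L (m ix - imin).
    have e2 : (0 < size (L ^+ (m ix - imin)))%N.
      by rewrite size_poly_gt0 expf_neq0.
    have e3 := size_Lp p a0.
    rewrite -/L in e3; rewrite e3 /= mul1n in e1.
    have sz : size (L ^+ (m ix - imin)) = (m ix - imin).+1 by rewrite -[in RHS]e1 prednK.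
    by rewrite sz; exact: ebound.
have [k1 [k1s k1nz k1min]] := first_nonzero H10.
exists k1; split; first exact: leq_trans k1s sH1.
rewrite HE coefM big_ord_recr /= big1 ?add0r.
  rewrite subnn -horner_coef0 horner_exp /L /Lp hornerD hornerC mul_polyC.
  by rewrite hornerZ hornerX mulr0 add0r mulf_neq0 ?expf_neq0.
by move=> j _; rewrite k1min ?mul0r.
Qed.

Unset Implicit Arguments. Set Strict Implicit.

Theorem proposition4p1 (K : fieldType) (u : {mpoly K[2]})
  (alpha beta gamma : K) (p : {poly K}) :
  (forall c : K, u != c%:MP) ->
  biased u ->
  alpha != 0 -> beta != 0 ->
  (2 <= (size p).-1)%N ->
  (tdeg u < tdeg (triang alpha beta gamma p u))%N.
Proof.
move=> nc hb a0 b0 n2.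
have sp : (1 < size p)%N by lia.
have p0 : p != 0 by rewrite -size_poly_eq0; lia.
have [ms msin [msd msxy msx]] := @u_facts K u nc hb.
rewrite mdeg2 in msd.
have hd : forall m, m \in msupp u -> (m ix + m iy <= tdeg u)%N.
  move=> m hm; rewrite -mdeg2; have := msize_mdeg_lt hm; rewrite /tdeg; lia.
pose W := (\max_(m <- msupp u) ((size p).-1 * m ix + m iy))%N.
have hW : forall m, m \in msupp u -> ((size p).-1 * m ix + m iy <= W)%N.
  move=> m hm.
  by apply: (leq_bigmax_seq (F := fun m : 'X_{1..2} => ((size p).-1 * m ix + m iy)%N)) hm _.
have ne : msupp u != [::] by apply/eqP => e; rewrite e in msin.
have [mW mWin mWW] := @bigmax_attained _ _
   (fun m : 'X_{1..2} => ((size p).-1 * m ix + m iy)%N) ne.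
have [k1 [k1lt k1nz]] := H_analysis (b := beta) a0 b0 p0 n2 hd msin msd msxy msx hW
   (ex_intro2 _ _ mW mWin mWW).
rewrite -(coefW gamma a0 b0 sp hW) psi_coef in k1nz.
case: (boolP (has (fun m : 'X_{1..2} => (m ix == k1) && ((size p).-1 * m ix + m iy == W)%N)
   (msupp (triang alpha beta gamma p u)))) => [/hasP [m' hm' /andP [/eqP e1 /eqP e2]] | hn].
  have := msize_mdeg_lt hm'; rewrite mdeg2 /tdeg.
  have := hW ms msin.
  move: msd k1lt msxy msx n2 e2; rewrite /tdeg e1; clearbody W; clear -W; move: (size p).-1 W => N W0; nia.
move: k1nz; rewrite big_seq big1 ?eqxx //.
move=> m hm; have := hasPn hn m hm => /negbTE ->; by rewrite mulr0.
Qed.
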